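(* Let $n > 1$ and let $H_n$ denote the Boolean hypercube graph on vertex set $\{0,1\}^n$, in which two vertices are adjacent iff they differ in exactly one coordinate. Suppose $K \subseteq \{0,1\}^n$ satisfies $|K| > 2^{n-1}$, and suppose that for some $D > 0$ every $y \in K$ has degree at most $D$ in the induced subgraph $H_n[K]$ (the graph on vertex set $K$ whose edges are the edges of $H_n$ with both endpoints in $K$). Then $\mathrm{compl}(\mathcal{G}_{CS,n}) \leq D$.
   Context: Let $S_n$ be the set of permutations $\pi=(\pi(1),\dots,\pi(n))$ of $[n]=\{1,\dots,n\}$. A Bob-strategy is a family of functions $F_t : S_n \to \{0,1\}$, $t=1,\dots,n-1$, where each $F_t$ is $t$-restricted, i.e. $F_t(\pi)$ depends only on $\pi(1),\dots,\pi(t)$. For a fixed Bob-strategy, a permutation $\pi\in S_n$ and $z\in\{0,1\}$, define $b(\pi,z)\in\{0,1\}^n$ by $b_j = F_t(\pi)$ if $j=\pi(t)$ for some $t<n$, and $b_j = z$ if $j=\pi(n)$. For $b\in\{0,1\}^n$, the suspect set is $S(b) := \{ i \in [n] : \exists \rho\in S_n, u\in\{0,1\} \text{ with } \rho(n)=i \text{ and } b(\rho,u)=b\}$. The cost of the strategy on $(\pi,z)$ is $|S(b(\pi,z))|$; the complexity of the strategy is the maximum cost over all pairs $(\pi,z)\in S_n\times\{0,1\}$; and $\mathrm{compl}(\mathcal{G}_{CS,n})$ is the minimum complexity over all Bob-strategies for $n$. *)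

(* Defs.v *)
From mathcomp Require Import all_boot all_fingroup.
Set Implicit Arguments. Unset Strict Implicit. Unset Printing Implicit Defensive.

Local Open Scope group_scope.

(* Positions and elements of [n] are 0-indexed: 'I_n.  A permutation
   pi : {perm 'I_n} lists pi 0, ..., pi (n-1)  (= pi(1), ..., pi(n) in the paper). *)

(* A (candidate) Bob-strategy: G p is the paper's F_{p+1}, the bit assigned to
   the element at position p (0-indexed).  Only p < n-1 is used. *)
Definition strategy (n : nat) := {ffun 'I_n -> {ffun {perm 'I_n} -> bool}}.

Definition restrictedb n (G : strategy n) : bool :=
  [forall p : 'I_n, (p.+1 < n) ==>
     [forall pi : {perm 'I_n}, forall rho : {perm 'I_n},
        [forall s : 'I_n, (s <= p) ==> (pi s == rho s)] ==> (G p pi == G p rho)]].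

Definition bvec n (G : strategy n) (pi : {perm 'I_n}) (z : bool) : {ffun 'I_n -> bool} :=
  [ffun j => let p := (pi^-1) j in if p.+1 < n then G p pi else z].

Definition suspects n (G : strategy n) (b : {ffun 'I_n -> bool}) : {set 'I_n} :=
  [set i | [exists rho : {perm 'I_n}, exists u : bool,
     [exists t : 'I_n, (t.+1 == n) && (rho t == i)] && (bvec G rho u == b)]].

Definition cost n (G : strategy n) pi z := #|suspects G (bvec G pi z)|.

Definition complexity n (G : strategy n) : nat :=
  \max_(pi : {perm 'I_n}) \max_(z : bool) cost G pi z.

Definition has_strategy_of_complexity n (k : nat) : bool :=
  [exists G : strategy n, restrictedb G && (complexity G == k)].

Lemma exists_strategy n : exists k, has_strategy_of_complexity n k.
Proof.
pose G0 : strategy n := [ffun _ => [ffun _ => false]].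
exists (complexity G0); apply/existsP; exists G0; rewrite eqxx andbT.
apply/forallP => p; apply/implyP => _; apply/forallP => pi; apply/forallP => rho.
by apply/implyP => _; rewrite !ffunE.
Qed.

Definition compl (n : nat) : nat := ex_minn (@exists_strategy n).

Local Close Scope group_scope.
Definition hadj n (x y : {ffun 'I_n -> bool}) : bool := #|[set i | x i != y i]| == 1%N.

Definition ind_deg n (K : {set {ffun 'I_n -> bool}}) (y : {ffun 'I_n -> bool}) : nat :=
  #|[set x in K | hadj x y]|.

(* Main.v *)
Require Import Defs.
From mathcomp Require Import all_boot all_fingroup.
From mathcomp Require Import zify.
Set Implicit Arguments. Unset Strict Implicit. Unset Printing Implicit Defensive.

Definition agree n (pi : {perm 'I_n}) (m : nat) (a x : {ffun 'I_n -> bool}) :=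
  [forall i, ((pi^-1)%g i < m) ==> (x i == a i)].
Definition cnt n (K : {set {ffun 'I_n -> bool}}) (pi : {perm 'I_n}) m a :=
  #|[set x in K | agree pi m a x]|.
Definition upd n (a : {ffun 'I_n -> bool}) (pi : {perm 'I_n}) k (c : bool) :
  {ffun 'I_n -> bool} :=
  [ffun i => if ((pi^-1)%g i : nat) == k then c else a i].
Fixpoint asg n (K : {set {ffun 'I_n -> bool}}) pi k : {ffun 'I_n -> bool} :=
  match k with
  | 0 => [ffun _ => false]
  | k.+1 => let a := asg K pi k in
     if cnt K pi k.+1 (upd a pi k false) < cnt K pi k.+1 (upd a pi k true)
     then upd a pi k true else upd a pi k false
  end.
Definition Gs n (K : {set {ffun 'I_n -> bool}}) : strategy n :=
  [ffun p : 'I_n => [ffun pi : {perm 'I_n} => asg K pi p.+1 (pi p)]].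

Lemma invE n (pi : {perm 'I_n}) i k (hk : k < n) :
  (((pi^-1)%g i : nat) == k) = (i == pi (Ordinal hk)).
Proof.
apply/eqP/eqP => [h|->]; last by rewrite permK.
by rewrite -[i](permKV pi); congr (pi _); apply: val_inj.
Qed.

Lemma split_cnt n (K : {set {ffun 'I_n -> bool}}) pi k a (hk : k < n) :
  cnt K pi k.+1 (upd a pi k false) + cnt K pi k.+1 (upd a pi k true)
  = cnt K pi k a.
Proof.
set j := pi (Ordinal hk).
set A := [set x in K | agree pi k a x].
have E : forall b x, agree pi k.+1 (upd a pi k b) x = agree pi k a x && (x j == b).
  move=> b x; apply/forallP/andP => [h|[/forallP h1 /eqP h2] i].
    split.
      apply/forallP => i; apply/implyP => hi; have := implyP (h i).
      rewrite ffunE ltnS (ltnW hi).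
      by rewrite (_ : (_ == k) = false) ?ltn_eqF //; apply => //.
    have := implyP (h j); rewrite ffunE invE eqxx; apply.
    by rewrite permK.
  apply/implyP; rewrite ffunE ltnS leq_eqVlt invE.
  case: eqP => [-> _|_ /= hi]; first by rewrite h2.
  exact: (implyP (h1 i)).
rewrite /cnt -(cardsID [set x : {ffun 'I_n -> bool} | x j] A) addnC.
congr (_ + _); apply: eq_card => x; rewrite !inE E.
  by case: (x \in K); case: (agree pi k a x); case: (x j).
by case: (x \in K); case: (agree pi k a x); case: (x j).
Qed.

Lemma cnt0 n (K : {set {ffun 'I_n -> bool}}) pi a : cnt K pi 0 a = #|K|.
Proof.
rewrite /cnt; apply: eq_card => x; rewrite !inE.
by case: (x \in K) => //=; apply/forallP => i.
Qed.

Lemma invariant n (K : {set {ffun 'I_n -> bool}}) pi :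
  0 < n -> 2 ^ (n - 1) < #|K| ->
  forall k, k < n -> 2 ^ (n - k) < 2 * cnt K pi k (asg K pi k).
Proof.
move=> n0 hK; elim=> [_|k IH hk].
  rewrite cnt0 subn0.
  have -> : 2 ^ n = 2 * 2 ^ (n - 1) by rewrite -expnS; congr (_ ^ _); lia.
  by rewrite ltn_pmul2l.
have := IH (ltnW hk); rewrite -(split_cnt _ _ _ (ltnW hk)) /=.
have -> : n - k = (n - k.+1).+1 by lia.
rewrite expnS.
case: ifP => h; [|move/negbT: h => h]; lia.
Qed.

Lemma stable n (K : {set {ffun 'I_n -> bool}}) (pi : {perm 'I_n}) i k d :
  (pi^-1)%g i < k -> asg K pi (k + d) i = asg K pi k i.
Proof.
move=> hi; elim: d => [|d IH]; first by rewrite addn0.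
rewrite addnS /=.
have ne : (((pi^-1)%g i : nat) == k + d) = false by apply/eqP; lia.
by case: ifP => _; rewrite ffunE ne IH.
Qed.

Lemma lt_ext (x y p : nat) : (forall k, k <= p -> (x == k) = (y == k)) ->
  forall k, k <= p.+1 -> (x < k) = (y < k).
Proof.
move=> h; elim=> [|k IH] hk.
  by case: x {h}; case: y.
have e1 := h k ltac:(lia).
have e2 := IH ltac:(lia).
apply/idP/idP => H; lia.
Qed.

Lemma asg_ext n (K : {set {ffun 'I_n -> bool}}) (pi rho : {perm 'I_n}) p :
  (forall s : 'I_n, s <= p -> pi s = rho s) -> p.+1 < n ->
  forall k, k <= p.+1 -> asg K pi k = asg K rho k.
Proof.
move=> hs hp.
have F2 : forall k i, k <= p -> (((pi^-1)%g i : nat) == k) = (((rho^-1)%g i : nat) == k).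
  move=> k i hk; have hkn : k < n by lia.
  by rewrite !(invE _ _ hkn) hs.
have F1 : forall k i, k <= p.+1 -> ((pi^-1)%g i < k) = ((rho^-1)%g i < k).
  by move=> k i; apply: lt_ext => k' hk'; apply: F2.
elim=> [//|k IH] hk /=.
rewrite IH; last by lia.
have U : forall c, upd (asg K rho k) pi k c = upd (asg K rho k) rho k c.
  by move=> c; apply/ffunP => i; rewrite !ffunE F2 //; lia.
have C : forall a, cnt K pi k.+1 a = cnt K rho k.+1 a.
  move=> a; apply: eq_card => x; rewrite !inE /agree.
  by congr (_ && _); apply: eq_forallb => i; rewrite F1.
by rewrite !U !C.
Qed.

Lemma Gs_restricted n (K : {set {ffun 'I_n -> bool}}) : restrictedb (Gs K).
Proof.
apply/forallP => p; apply/implyP => hp; apply/forallP => pi; apply/forallP => rho.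
apply/implyP => /forallP hs.
have hs' : forall s : 'I_n, s <= p -> pi s = rho s.
  by move=> s hsp; apply/eqP; exact: (implyP (hs s)).
rewrite !ffunE (asg_ext K hs' hp (leqnn _)) hs'; [by [] | exact: leqnn].
Qed.

Lemma bvecE n (K : {set {ffun 'I_n -> bool}}) (pi : {perm 'I_n}) z i :
  bvec (Gs K) pi z i = if ((pi^-1)%g i).+1 < n then asg K pi n.-1 i else z.
Proof.
rewrite ffunE /=; case: ifP => h; last by [].
rewrite !ffunE permKV.
have E : n.-1 = ((pi^-1)%g i).+1 + (n.-1 - ((pi^-1)%g i).+1) by lia.
by rewrite E stable.
Qed.

Lemma bvec_inK n (K : {set {ffun 'I_n -> bool}}) (pi : {perm 'I_n}) z :
  1 < n -> 2 ^ (n - 1) < #|K| -> bvec (Gs K) pi z \in K.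
Proof.
move=> n1 hK.
have hm : n.-1 < n by lia.
have := invariant pi (ltnW n1) hK hm.
have -> : n - n.-1 = 1 by lia.
set a := asg K pi n.-1 => hc.
set l := pi (Ordinal hm).
have claim : forall x, x \in [set x in K | agree pi n.-1 a x] -> x = bvec (Gs K) pi (x l).
  move=> x; rewrite inE => /andP [_ /forallP hx]; apply/ffunP => i.
  rewrite bvecE; case: ifP => h.
    by apply/eqP; apply: (implyP (hx i)); lia.
  have -> : i = l.
    rewrite /l -[i](permKV pi); congr (pi _); apply: val_inj => /=.
    have := ltn_ord ((pi^-1)%g i); lia.
  by [].
apply/negPn/negP => hz.
have sub : [set x in K | agree pi n.-1 a x] \subset [set bvec (Gs K) pi (~~ z)].
  apply/subsetP => x hx; rewrite inE; apply/eqP.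
  have hxK : x \in K by move: hx; rewrite inE => /andP [].
  rewrite (claim x hx); case: (boolP (x l == z)) => [/eqP e|e].
    by move: hxK; rewrite (claim x hx) e (negbTE hz).
  by move: e; destruct (x l), z.
have := subset_leq_card sub; rewrite cards1.
move: hc; rewrite /cnt; lia.
Qed.

Definition flip n (b : {ffun 'I_n -> bool}) (i : 'I_n) : {ffun 'I_n -> bool} :=
  [ffun j => if j == i then ~~ b j else b j].

Lemma flip_inj n (b : {ffun 'I_n -> bool}) : injective (flip b).
Proof.
move=> i i' /ffunP /(_ i); rewrite !ffunE eqxx.
by case: eqP => // _; case: (b i).
Qed.

Lemma flip_adj n (b : {ffun 'I_n -> bool}) i : hadj (flip b i) b.
Proof.
rewrite /hadj (_ : [set j | flip b i j != b j] = [set i]) ?cards1 //.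
apply/setP => j; rewrite !inE ffunE; case: (boolP (j == i)) => [/eqP ->|hj].
  by case: (b i).
by rewrite eqxx.
Qed.

Lemma susp_flip n (K : {set {ffun 'I_n -> bool}}) (pi : {perm 'I_n}) z i :
  1 < n -> 2 ^ (n - 1) < #|K| ->
  i \in suspects (Gs K) (bvec (Gs K) pi z) -> flip (bvec (Gs K) pi z) i \in K.
Proof.
move=> n1 hK; rewrite inE => /existsP [rho /existsP [u /andP [/existsP [t /andP [/eqP tn /eqP rt]] /eqP eb]]].
have -> : flip (bvec (Gs K) pi z) i = bvec (Gs K) rho (~~ u).
  apply/ffunP => j; rewrite ffunE -eb !bvecE.
  case: eqP => [->|ne].
    by rewrite -rt permK tn ltnn.
  have : (rho^-1)%g j != t.
    by apply/eqP => e; apply: ne; rewrite -rt -e permKV.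
  have := ltn_ord ((rho^-1)%g j).
  move: ((rho^-1)%g j) => x hx hne.
  have /eqP hne' : (x : nat) != t by [].
  have -> : x.+1 < n by lia.
  by [].
exact: bvec_inK.
Qed.

Lemma cost_le n (K : {set {ffun 'I_n -> bool}}) (D : nat) (pi : {perm 'I_n}) z :
  1 < n -> 2 ^ (n - 1) < #|K| ->
  (forall y, y \in K -> ind_deg K y <= D) -> cost (Gs K) pi z <= D.
Proof.
move=> n1 hK hD.
set b := bvec (Gs K) pi z.
have bK : b \in K by exact: bvec_inK.
apply: leq_trans (hD _ bK).
rewrite /cost -/b -(card_imset _ (@flip_inj n b)) /ind_deg.
apply: subset_leq_card; apply/subsetP => x /imsetP [i hi ->].
by rewrite inE flip_adj andbT; exact: susp_flip.
Qed.

Theorem theorem1 (n : nat) (K : {set {ffun 'I_n -> bool}}) (D : nat) :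
  1 < n -> 2 ^ (n - 1) < #|K| -> 0 < D ->
  (forall y, y \in K -> ind_deg K y <= D) ->
  compl n <= D.
Proof.
move=> n1 hK _ hD.
have hc : complexity (Gs K) <= D.
  apply/bigmax_leqP => pi _; apply/bigmax_leqP => z _.
  exact: cost_le.
have hs : has_strategy_of_complexity n (complexity (Gs K)).
  by apply/existsP; exists (Gs K); rewrite Gs_restricted eqxx.
rewrite /compl; case: ex_minnP => m _ minm.
exact: leq_trans (minm _ hs) hc.
Qed.
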